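(* The Fomin–Kirillov algebra $\mathcal{E}_3$ admits no truncated point modules of degree greater than $1$; in particular $\mathcal{P}_2(\mathcal{E}_3)=\emptyset$.
   Context: Over an algebraically closed field $k$, $\mathcal{E}_3$ is the graded algebra generated by degree-$1$ elements $x_{12},x_{13},x_{23}$ subject to $x_{12}^2=x_{13}^2=x_{23}^2=0$, $x_{12}x_{23}-x_{23}x_{13}-x_{13}x_{12}=0$ and $x_{23}x_{12}-x_{13}x_{23}-x_{12}x_{13}=0$. A degree-$d$ truncated point module over a connected graded algebra $A$ generated in degree $1$ is a graded cyclic module generated in degree $0$ with Hilbert series $1+t+\cdots+t^d$; $\mathcal{P}_d(A)$ is the space of such modules. *)

(* Defs.v *)
From HB Require Import structures.
From mathcomp Require Import all_boot all_order all_algebra.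
Set Implicit Arguments. Unset Strict Implicit. Unset Printing Implicit Defensive.
Import GRing.Theory.
Local Open Scope ring_scope.

(* Graded module M = (+)_i M_i with M_i = 'rV[k]_(hdim d i), so that
   dim M_i = 1 for i <= d and 0 otherwise (Hilbert series 1 + t + ... + t^d).
   The generator x_j acts M_i -> M_{i+1} by v |-> v *m X i j (row vectors). *)

Definition hdim (d i : nat) : nat := if (i <= d)%N then 1%N else 0%N.

Definition x12 : 'I_3 := @Ordinal 3 0 isT.
Definition x13 : 'I_3 := @Ordinal 3 1 isT.
Definition x23 : 'I_3 := @Ordinal 3 2 isT.

Section TPM.
Variables (k : fieldType) (d : nat).
Variable X : forall i : nat, 'I_3 -> 'M[k]_(hdim d i, hdim d i.+1).

(* matrix of the action of the monomial x_a x_b : M_i -> M_{i+2}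
   (first x_b, then x_a) *)
Definition act2 (i : nat) (a b : 'I_3) : 'M[k]_(hdim d i, hdim d i.+2) :=
  X i b *m X i.+1 a.

Definition E3_relations_hold : Prop :=
  forall i : nat,
    [/\ act2 i x12 x12 = 0, act2 i x13 x13 = 0, act2 i x23 x23 = 0,
        act2 i x12 x23 - act2 i x23 x13 - act2 i x13 x12 = 0
      & act2 i x23 x12 - act2 i x13 x23 - act2 i x12 x13 = 0].

(* M is generated by its degree-0 part: M_{i+1} = x12 M_i + x13 M_i + x23 M_i
   for every i (row space of the sum equals the whole space). *)
Definition generated_in_degree0 : Prop :=
  forall i : nat, (1%:M <= \sum_(j < 3) <<X i j>>)%MS.

Definition is_truncated_point_module_E3 : Prop :=
  E3_relations_hold /\ generated_in_degree0.
End TPM.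

(* Main.v *)
Require Import Defs.
From HB Require Import structures.
From mathcomp Require Import all_boot all_order all_algebra.
Import GRing.Theory.
Local Open Scope ring_scope.

Lemma alg (k : fieldType) (a0 a1 a2 b0 b1 b2 : k) : a0*b0=0 -> a1*b1=0 -> a2*b2=0 ->
  a2*b0 - a1*b2 - a0*b1 = 0 -> a0*b2 - a2*b1 - a1*b0 = 0 ->
  [|| a0 != 0, a1 != 0 | a2 != 0] -> [&& b0 == 0, b1 == 0 & b2 == 0].
Proof.
move=> /eqP; rewrite mulf_eq0 => /orP[]/eqP h0;
move=> /eqP; rewrite mulf_eq0 => /orP[]/eqP h1;
move=> /eqP; rewrite mulf_eq0 => /orP[]/eqP h2; subst;
rewrite ?mul0r ?mulr0 ?subr0 ?sub0r ?oppr_eq0 ?eqxx //= => /eqP e4 /eqP e5;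
move: e4 e5; rewrite ?oppr_eq0 ?subr_eq0 ?mulf_eq0 ?eqxx ?orbF ?orbT //=.
all: try by move=> /orP[]/eqP-> ? /orP[]/eqP->.
all: by do 2 (move=> /orP[]/eqP->); rewrite ?eqxx ?orbF ?andbT //=. Qed.
Lemma I3cases (j : 'I_3) : j = x12 \/ j = x13 \/ j = x23.
Proof. by case: j => -[|[|[|]]] // i; [left|right;left|right;right]; apply/val_inj. Qed.

Lemma gen_nz (k : fieldType) (A : 'I_3 -> 'M[k]_1) :
  (1%:M <= \sum_(j < 3) <<A j>>)%MS -> exists j, A j 0 0 != 0.
Proof.
move=> G; apply/existsP; apply: contraLR G; rewrite negb_exists => /forallP H.
have -> : (\sum_(j < 3) <<A j>>)%MS = 0.
  apply: big1 => j _; rewrite (mx11_scalar (A j)).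
  by move: (H j); rewrite negbK => /eqP ->; rewrite raddf0 genmx0.
by rewrite submx0 oner_eq0.
Qed.

Lemma key (k : fieldType) n0 n1 n2 (e0 : n0 = 1%N) (e1 : n1 = 1%N) (e2 : n2 = 1%N)
  (A : 'I_3 -> 'M[k]_(n0, n1)) (B : 'I_3 -> 'M[k]_(n1, n2)) :
  [/\ A x12 *m B x12 = 0, A x13 *m B x13 = 0, A x23 *m B x23 = 0,
      A x23 *m B x12 - A x13 *m B x23 - A x12 *m B x13 = 0
    & A x12 *m B x23 - A x23 *m B x13 - A x13 *m B x12 = 0] ->
  (1%:M <= \sum_(j < 3) <<A j>>)%MS -> (1%:M <= \sum_(j < 3) <<B j>>)%MS -> False.
Proof.
subst => -[r1 r2 r3 r4 r5] /gen_nz [ja ha] /gen_nz [jb hb].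
have E : forall i j, A i *m B j = (A i 0 0 * B j 0 0)%:M.
  by move=> i j; rewrite (mx11_scalar (A i)) (mx11_scalar (B j)) -scalar_mxM !mxE !eqxx !mulr1n.
move: r1 r2 r3 r4 r5; rewrite !E -!raddfB /=.
have S : forall x : k, (x%:M : 'M_1) = 0 -> x = 0.
  by move=> x /(congr1 (fun M : 'M_1 => M 0 0)); rewrite !mxE.
move=> /S r1 /S r2 /S r3 /S r4 /S r5.
have := @alg _ _ _ _ _ _ _ r1 r2 r3 r4 r5.
have hA : [|| A x12 0 0 != 0, A x13 0 0 != 0 | A x23 0 0 != 0].
  by move: ha; case: (I3cases ja) => [->|[->|->]] ->; rewrite ?orbT.
rewrite hA => /(_ isT) /and3P[/eqP b0 /eqP b1 /eqP b2].
by move: hb; case: (I3cases jb) => [->|[->|->]]; rewrite ?b0 ?b1 ?b2 eqxx.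
Qed.

Lemma hdim_le (d i : nat) : (i <= d)%N -> hdim d i = 1%N.
Proof. by rewrite /hdim => ->. Qed.

Theorem proposition2p1 (k : closedFieldType) (d : nat) (hd : (2 <= d)%N)
  (X : forall i : nat, 'I_3 -> 'M[k]_(hdim d i, hdim d i.+1)) :
  ~ is_truncated_point_module_E3 X.
Proof.
move=> [R G]; have [r1 r2 r3 r4 r5] := R 0%N.
have e0 : hdim d 0 = 1%N by apply: hdim_le.
have e1 : hdim d 1 = 1%N by apply: hdim_le; apply: leq_trans hd.
have e2 : hdim d 2 = 1%N by apply: hdim_le.
exact: (@key k _ _ _ e0 e1 e2 (X 0%N) (X 1%N) (And5 r1 r2 r3 r4 r5) (G 0%N) (G 1%N)).
Qed.
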